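(* Let $G$ be a finite connected chordal graph. Then its center $C(G)$ is a diameter certificate of $G$, i.e. for every vertex $u$, $\min_{c\in C(G)}(d(u,c)+e(c))\le\operatorname{diam}(G)$.
   Context: A graph is chordal if every induced cycle of length at least 4 has a chord. $d$ shortest-path distance, $e(v)=\max_u d(v,u)$, $\operatorname{rad}(G)=\min_v e(v)$, $\operatorname{diam}(G)=\max_v e(v)$, $C(G)=\{c: e(c)=\operatorname{rad}(G)\}$. *)

(* Defs.v *)
From mathcomp Require Import all_boot.
Set Implicit Arguments. Unset Strict Implicit. Unset Printing Implicit Defensive.

Section Graph.
Variables (T : finType) (e : rel T).

Definition walkb (n : nat) (u v : T) : bool :=
  [exists p : n.-tuple T, path e u p && (last u p == v)].

(* In a connected graph such an n < #|T| exists; the search range iota 0 #|T|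
   is therefore exhaustive (value #|T| only for unreachable pairs). *)
Definition dist (u v : T) : nat := find (fun n => walkb n u v) (iota 0 #|T|).

Definition ecc (v : T) : nat := \max_(u : T) dist v u.
Definition diam : nat := \max_(v : T) ecc v.
Definition rad : nat := \big[minn/diam]_(v : T) ecc v.
Definition center : {set T} := [set c | ecc c == rad].

Definition simple_graph : Prop := symmetric e /\ irreflexive e.
Definition connected_graph : Prop := forall u v : T, connect e u v.

(* chordal: every cycle x :: s (vertices distinct) of length >= 4 has a chord,
   i.e. an edge between two vertices that are not consecutive on the cycle *)
Definition chordal : Prop :=
  forall (x : T) (s : seq T),
    uniq (x :: s) -> 4 <= size (x :: s) -> cycle e (x :: s) ->
    exists i j : nat,
      [/\ i < j, j < size (x :: s), i.+1 < j,
          ~~ ((i == 0) && (j == (size (x :: s)).-1)) &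
          e (nth x (x :: s) i) (nth x (x :: s) j)].
End Graph.

(* Main.v *)
Require Import Defs.
From mathcomp Require Import all_boot zify.
Set Implicit Arguments. Unset Strict Implicit. Unset Printing Implicit Defensive.


Section Dist.
Variables (T : finType) (e : rel T).
Hypothesis sym : symmetric e.
Hypothesis irr : irreflexive e.
Hypothesis conn : connected_graph e.

Notation d := (dist e).

Lemma walkP n u v :
  reflect (exists p, [/\ size p = n, path e u p & last u p = v]) (walkb e n u v).
Proof.
apply: (iffP existsP) => [[t /andP [Hp /eqP Hl]]|[p [Hs Hp Hl]]].
  by exists (tval t); rewrite size_tuple.
have Hs' : size p == n by rewrite Hs.
by exists (Tuple Hs'); rewrite /= Hp Hl eqxx.
Qed.

Lemma walk_small u v : exists2 n, n < #|T| & walkb e n u v.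
Proof.
have /connectP [p Hp ->] := conn u v.
case: (shortenP Hp) => p' Hp' Hu _.
exists (size p'); last by apply/walkP; exists p'.
have := card_uniqP Hu => /= Hc.
have := max_card (mem (u :: p')).
by rewrite Hc /=.
Qed.

Lemma dist_le n u v : walkb e n u v -> d u v <= n.
Proof.
move=> Hw; rewrite /dist.
case: (ltnP n #|T|) => Hn.
  rewrite leqNgt; apply/negP => Hlt.
  have := before_find 0 Hlt.
  by rewrite nth_iota // add0n Hw.
apply: leq_trans (find_size _ _) _.
by rewrite size_iota.
Qed.

Lemma dist_walk u v : walkb e (d u v) u v.
Proof.
case: (walk_small u v) => n Hn Hw.
have Hh : has (fun n => walkb e n u v) (iota 0 #|T|).
  by apply/hasP; exists n => //; rewrite mem_iota.
have := nth_find 0 Hh.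
rewrite has_find size_iota in Hh.
by rewrite nth_iota // add0n.
Qed.

Lemma dist_walkP u v : exists p, [/\ size p = d u v, path e u p & last u p = v].
Proof. exact/walkP/dist_walk. Qed.

Lemma dist0 u : d u u = 0.
Proof.
apply/eqP; rewrite -leqn0; apply: dist_le; apply/walkP; by exists [::].
Qed.

Lemma dist0E u v : (d u v == 0) = (u == v).
Proof.
apply/idP/idP => [/eqP H|/eqP->]; last by rewrite dist0.
have [p [Hs _ Hl]] := dist_walkP u v.
by move: Hs Hl; rewrite H; case: p => // _ /= ->.
Qed.

Lemma dist_edge u v : e u v -> d u v <= 1.
Proof. move=> H; apply: dist_le; apply/walkP; exists [:: v]; by rewrite /= H. Qed.

Lemma dist_tri u v w : d u w <= d u v + d v w.
Proof.
have [p [Hs Hp Hl]] := dist_walkP u v.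
have [q [Hs' Hq Hl']] := dist_walkP v w.
apply: dist_le; apply/walkP; exists (p ++ q).
by rewrite size_cat Hs Hs' cat_path Hp Hl Hq last_cat Hl Hl'.
Qed.

Lemma rev_walk p u : path e u p ->
  exists q, [/\ size q = size p, path e (last u p) q & last (last u p) q = u].
Proof.
elim: p u => [|x p IH] u /=; first by move=> _; exists [::].
move=> /andP [Hux Hp].
have [q [Hs Hq Hl]] := IH x Hp.
exists (rcons q u); rewrite size_rcons Hs rcons_path Hq Hl last_rcons.
by rewrite sym Hux.
Qed.

Lemma distC u v : d u v = d v u.
Proof.
suff H : forall u v, d v u <= d u v by apply/eqP; rewrite eqn_leq !H.
move=> x y.
have [p [Hs Hp Hl]] := dist_walkP x y.
have [q [Hs' Hq Hl']] := rev_walk Hp.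
apply: dist_le; apply/walkP; exists q; by rewrite Hs' Hs -Hl.
Qed.

Lemma dist_step u v n : d u v = n.+1 -> exists2 w, e u w & d w v = n.
Proof.
move=> H.
have [p [Hs Hp Hl]] := dist_walkP u v.
move: Hs Hp Hl; rewrite H; case: p => // w p [Hs] /= /andP [Huw Hp] Hl.
exists w => //.
apply/eqP; rewrite eqn_leq; apply/andP; split.
  by rewrite -Hs; apply: dist_le; apply/walkP; exists p.
have := dist_tri u w v; rewrite H.
have := dist_edge Huw.
move=> H1 H2; rewrite -ltnS; apply: leq_trans H2 _.
by rewrite -add1n leq_add2r.
Qed.

Lemma dist_edge_lev z x y : e x y -> d z y <= (d z x).+1.
Proof.
move=> H; apply: leq_trans (dist_tri z x y) _.
by rewrite -addn1 leq_add2l dist_edge.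
Qed.

Lemma edge_neq x y : e x y -> x != y.
Proof. by move=> H; apply/eqP => E; move: H; rewrite E irr. Qed.

End Dist.


Ltac slia := repeat match goal with H : ?P |- _ =>
  lazymatch P with
  | is_true (leq _ _) => fail
  | @eq nat _ _ => fail
  | @eq bool _ _ => fail
  | not (@eq _ _ _) => fail
  | _ => clear H
  end end; lia.

Section Paths.
Variables (T : finType) (e : rel T).
Hypothesis sym : symmetric e.

Definition ipath (Q : pred T) a p b := path e a (rcons p b) && all Q p.

Definition chordless (w : seq T) :=
  forall x0 i j, i.+1 < j -> j < size w -> ~~ e (nth x0 w i) (nth x0 w j).

Lemma last_take_nth (s : seq T) x i : i <= size s -> last x (take i s) = nth x (x :: s) i.
Proof.
elim: s x i => [|y s IH] x [|i] //= Hi.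
rewrite IH //; apply: set_nth_default => /=; lia.
Qed.

Lemma take_rcons_le (s : seq T) b i : i <= size s -> take i (rcons s b) = take i s.
Proof.
move=> Hi; rewrite -cats1 take_cat.
case: ltnP => H //.
have -> : i = size s by lia.
by rewrite subnn take0 cats0 take_size.
Qed.

Lemma shortcut Q a p b i j :
  ipath Q a p b -> i.+1 < j -> j < (size p).+2 ->
  e (nth a (a :: rcons p b) i) (nth a (a :: rcons p b) j) ->
  exists2 p', ipath Q a p' b & size p' < size p.
Proof.
move=> /andP [Hp HQ] Hij Hj He.
set q := rcons p b in Hp He.
have Hsq : size q = (size p).+1 by rewrite size_rcons.
exists (take i p ++ drop j.-1 p); last first.
  rewrite size_cat size_take size_drop; case: ifP; lia.
apply/andP; split; last first.
  rewrite all_cat; apply/andP; split; apply/allP => x Hx; move/allP: HQ; apply.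
    exact: mem_take Hx.
  exact: mem_drop Hx.
have -> : rcons (take i p ++ drop j.-1 p) b = take i q ++ drop j.-1 q.
  by rewrite rcons_cat /q drop_rcons ?take_rcons_le //; lia.
rewrite cat_path; apply/andP; split; first exact: take_path.
rewrite last_take_nth; last lia.
rewrite (drop_nth a); last lia.
have Ej : nth a q j.-1 = nth a (a :: q) j by case: j Hij {Hj He}.
rewrite /= Ej He /=.
have Hp2 : path e (last a (take j q)) (drop j q).
  by move: Hp; rewrite -{1}(cat_take_drop j q) cat_path => /andP [].
have -> : j.-1.+1 = j by lia.
by rewrite last_take_nth in Hp2 => //; lia.
Qed.

Lemma ipath_chordless Q a p b : ipath Q a p b ->
  exists2 p', ipath Q a p' b & chordless (a :: rcons p' b).
Proof.
move: {2}(size p) (leqnn (size p)) => n.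
elim: n p => [|n IH] p Hn Hip.
- exists p => // x0 i j Hij Hj.
  move: Hj; rewrite /= size_rcons; have -> : size p = 0 by lia. lia.
- set w := a :: rcons p b.
  have Hsw : size w = (size p).+2 by rewrite /= size_rcons.
  case: (boolP [exists i : 'I_(size w), exists j : 'I_(size w),
           (i.+1 < j) && e (nth a w i) (nth a w j)]).
  + move=> /existsP [i /existsP [j /andP [Hij He]]].
    have [p' Hp' Hs] := shortcut Hip Hij (leq_trans (ltn_ord j) (eq_leq Hsw)) He.
    apply: IH Hp'; lia.
  + move=> /negP Hno; exists p => // x0 i j Hij Hj; apply/negP => He.
    apply: Hno; apply/existsP; exists (Ordinal (ltn_trans (ltnSn i) (ltn_trans Hij Hj))).
    apply/existsP; exists (Ordinal Hj) => /=; rewrite Hij /=.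
    rewrite /w (set_nth_default x0 a Hj) (set_nth_default x0 a) //; lia.
Qed.

Lemma chordless_uniq Q a p b : ipath Q a p b -> chordless (a :: rcons p b) -> uniq p.
Proof.
move=> /andP [Hp _] Hc; apply: contraT => /(uniqPn a) [i [k [Hik Hk Heq]]].
move/(pathP a): Hp => /(_ k.+1).
rewrite size_rcons ltnS => /(_ Hk).
have := Hc a i.+1 k.+2; rewrite /= !size_rcons.
move=> H.
have H1 : i.+2 < k.+2 by lia.
have H2 : k.+2 < (size p).+2 by rewrite !ltnS.
move: {H H1 H2} (H H1 H2).
rewrite /= !nth_rcons.
have -> : i < size p by apply: ltn_trans Hik Hk.
rewrite Hk Heq /=.
case: (ltnP k.+1 (size p)) => Hk1; first by move/negbTE ->.
have -> : k.+1 = size p by apply/eqP; rewrite eqn_leq Hk Hk1.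
by rewrite eqxx => /negbTE ->.
Qed.

End Paths.


Section Two.
Variables (T : finType) (e : rel T).
Hypothesis sym : symmetric e.
Hypothesis ch : chordal e.

Lemma two_paths (Q1 Q2 : pred T) b1 b2 p1 p2 :
  (forall x y, Q1 x -> Q2 y -> ~~ e x y) -> (forall x, Q1 x -> ~~ Q2 x) ->
  ~~ Q1 b1 -> ~~ Q2 b1 -> ~~ Q1 b2 -> ~~ Q2 b2 -> b1 != b2 -> ~~ e b1 b2 ->
  ipath e Q1 b1 p1 b2 -> ipath e Q2 b2 p2 b1 -> False.
Proof.
move=> HQ12 HQd H11 H21 H12 H22 Hb12 Hb Hp1 Hp2.
case: (ipath_chordless Hp1) => q1 Hq1 Hc1.
case: (ipath_chordless Hp2) => q2 Hq2 Hc2.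
clear p1 p2 Hp1 Hp2.
have Hu1 := chordless_uniq Hq1 Hc1.
have Hu2 := chordless_uniq Hq2 Hc2.
move: (Hq1) (Hq2) => /andP [Hpa1 Ha1] /andP [Hpa2 Ha2].
have Hn1 : 0 < size q1.
  by move: Hpa1; case: q1 {Hq1 Hc1 Hu1 Ha1} => [|//] /=; rewrite andbT (negbTE Hb).
have Hn2 : 0 < size q2.
  by move: Hpa2; case: q2 {Hq2 Hc2 Hu2 Ha2} => [|//] /=; rewrite andbT sym (negbTE Hb).
have notin1 x q (Q : pred T) : all Q q -> ~~ Q x -> x \notin q.
  move=> /allP Ha Hx; apply/negP => /Ha; exact/negP.
have Hdis : forall x, x \in q1 -> x \notin q2.
  move=> x /(allP Ha1) Hx; apply: notin1 Ha2 _; exact: HQd.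
set n1 := size q1 in Hn1 *; set n2 := size q2 in Hn2 *.
have := ch (x := b1) (s := q1 ++ b2 :: q2).
case.
- rewrite /= mem_cat inE !negb_or (notin1 _ _ _ Ha1 H11) /= Hb12 /=.
  rewrite (notin1 _ _ _ Ha2 H21) cat_uniq Hu1 /= (notin1 _ _ _ Ha2 H22) Hu2 andbT.
  rewrite andbT negb_or (notin1 _ _ _ Ha1 H12) /=.
  apply/hasPn => x Hx /=; apply/negP => Hx1; move: (Hdis x Hx1); by rewrite Hx.
- by rewrite /= size_cat /= -/n1 -/n2; slia.
- by rewrite /= rcons_cat /= -cat_rcons cat_path Hpa1 last_rcons Hpa2.
move=> i [j [Hij Hj Hij1 Hnot He]].
set c := b1 :: q1 ++ b2 :: q2 in Hj Hnot He.
set w1 := b1 :: rcons q1 b2 in Hc1.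
set w2 := b2 :: rcons q2 b1 in Hc2.
have Hsc : size c = n1 + n2 + 2 by rewrite /c /= size_cat /= -/n1 -/n2; slia.
rewrite Hsc in Hj Hnot.
have Hs1 : size w1 = n1 + 2 by rewrite /w1 /= size_rcons -/n1; slia.
have Hs2 : size w2 = n2 + 2 by rewrite /w2 /= size_rcons -/n2; slia.
have F1 k : k <= n1 + 1 -> nth b1 c k = nth b1 w1 k.
  move=> Hk; rewrite /c /w1 -cat_rcons -cat_cons nth_cat /= size_rcons -/n1.
  by case: ifP => //; slia.
have F2 k : n1 + 1 <= k -> k < n1 + n2 + 2 -> nth b1 c k = nth b1 w2 (k - (n1 + 1)).
  move=> Hk Hk2; rewrite /c -cat_cons nth_cat /= -/n1 ifN; last by slia.
  rewrite /w2 -cats1 -cat_cons nth_cat /= -/n2.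
  have -> : n1.+1 = n1 + 1 by slia.
  by rewrite ifT; [|slia].
have F3 : nth b1 w2 (n2 + 1) = b1.
  by rewrite /w2 addn1 /= nth_rcons ltnn eqxx.
have F4 k : 1 <= k <= n1 -> nth b1 c k \in q1.
  move=> /andP [Hk Hk']; rewrite /c; case: k Hk Hk' => [|k] Hk Hk' //=.
  have Hk2 : k < size q1 by rewrite -/n1; slia.
  by rewrite nth_cat ifT //; apply: mem_nth.
have F5 k : 1 <= k <= n2 -> nth b1 w2 k \in q2.
  move=> /andP [Hk Hk']; rewrite /w2; case: k Hk Hk' => [|k] Hk Hk' //=.
  have Hk2 : k < size q2 by rewrite -/n2; slia.
  by rewrite nth_rcons ifT //; apply: mem_nth.
case: (leqP j (n1 + 1)) => Hj1.
  rewrite !F1 in He; try slia.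
  have Hjw : j < size w1 by rewrite Hs1; slia.
  by move: (Hc1 b1 i j Hij1 Hjw); rewrite He.
case: (leqP (n1 + 1) i) => Hi1.
  rewrite !F2 in He; try slia.
  have h1 : (i - (n1 + 1)).+1 < j - (n1 + 1) by slia.
  have h2 : j - (n1 + 1) < size w2 by rewrite Hs2; slia.
  by move: (Hc2 b1 _ _ h1 h2); rewrite He.
case: i Hij Hij1 Hnot He Hi1 => [|i] Hij Hij1 Hnot He Hi1.
  have Hj2 : j != n1 + n2 + 1.
    by move: Hnot; rewrite eqxx /= (_ : (n1 + n2 + 2).-1 = n1 + n2 + 1) //; slia.
  have Hj3 : j < n1 + n2 + 1 by move/eqP: Hj2 => Hj2; slia.
  rewrite (F2 j) in He; try slia.
  have h1 : (j - (n1 + 1)).+1 < n2 + 1 by slia.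
  have h2 : n2 + 1 < size w2 by rewrite Hs2; slia.
  have E0 : nth b1 c 0 = b1 by [].
  by move: (Hc2 b1 _ _ h1 h2); rewrite F3 sym -E0 He.
have Hx1 := F4 i.+1 ltac:(apply/andP; split; slia).
rewrite (F2 j) in He; try slia.
have Hx2 := F5 (j - (n1 + 1)) ltac:(apply/andP; split; slia).
move: (HQ12 _ _ (allP Ha1 _ Hx1) (allP Ha2 _ Hx2)).
by rewrite He.
Qed.
End Two.


Section Cluster.
Variables (T : finType) (e : rel T).
Hypothesis sym : symmetric e.
Hypothesis irr : irreflexive e.
Hypothesis conn : connected_graph e.
Hypothesis ch : chordal e.

Lemma path_all (R : rel T) (P : pred T) x q :
  (forall a b, R a b -> P a -> P b) -> P x -> path R x q -> all P (x :: q).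
Proof.
move=> HR; elim: q x => [|y q IH] x Hx /=; first by rewrite Hx.
move=> /andP [Hxy Hp]; rewrite Hx /=; exact: (IH y (HR _ _ Hxy Hx) Hp).
Qed.

Lemma ipath_conn (R : rel T) (Q : pred T) a x y b :
  subrel R e -> (forall u v, R u v -> Q u -> Q v) -> Q x -> e a x -> e y b ->
  connect R x y -> exists p, ipath e Q a p b.
Proof.
move=> HRe HRQ Hx Hax Hyb /connectP [q Hq Hl].
exists (x :: q); apply/andP; split.
  rewrite /= Hax rcons_path (sub_path HRe Hq) -Hl Hyb //.
exact: path_all Hq.
Qed.

Variables (z : T) (m : nat) (s : T).
Local Notation lev x := (dist e z x).
Definition eU := [rel x y | e x y && (m < lev x) && (m < lev y)].
Definition inS x := (m < lev x) && connect eU s x.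
Definition inK b := (lev b == m) && [exists x, inS x && e b x].

Lemma eU_sym : connect_sym eU.
Proof. apply: sym_connect_sym => x y /=; rewrite sym; case: (e y x) => //=; exact: andbC. Qed.

Lemma S_edge x y : inS x -> e x y -> m < lev y -> inS y.
Proof.
move=> /andP [Hx Hc] Hxy Hy; rewrite /inS Hy /=.
apply: connect_trans Hc (connect1 _); by rewrite /= Hxy Hx Hy.
Qed.

Lemma lev_edge x y : e x y -> lev y <= (lev x).+1.
Proof. exact: dist_edge_lev. Qed.

Lemma conn_down (Q2 : pred T) :
  (forall x, Q2 x = (lev x < m)) ->
  forall x, lev x < m -> connect [rel u v | e u v && Q2 u && Q2 v] x z.
Proof.
move=> HQ x; move Hn : (lev x) => n; elim: n x Hn => [|n IH] x Hn Hlt.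
  by move/eqP: Hn; rewrite distC // dist0E // => /eqP ->.
have [x' Hxx' Hd] : exists2 x', e x x' & dist e x' z = n.
  by apply: dist_step => //; rewrite distC.
apply: connect_trans (connect1 _) (IH x' _ _).
- by rewrite /= Hxx' !HQ Hn Hlt /= distC // Hd; slia.
- by rewrite distC.
- by slia.
Qed.

Lemma cluster b1 b2 : inK b1 -> inK b2 -> b1 != b2 -> e b1 b2.
Proof.
move=> /andP [/eqP Hl1 /existsP [x1 /andP [Hx1 He1]]]
       /andP [/eqP Hl2 /existsP [x2 /andP [Hx2 He2]]] Hb.
case: (boolP (e b1 b2)) => // Hne; exfalso.
pose Q2 : pred T := fun x => lev x < m.
have [p1 Hp1] : exists p, ipath e inS b1 p b2.
  have Hc : connect eU x1 x2.
    move: Hx1 Hx2 => /andP [_ H1] /andP [_ H2].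
    by apply: connect_trans H2; rewrite eU_sym.
  apply: (ipath_conn (R := eU)) He1 _ Hc.
  + by move=> u v /andP [/andP []].
  + by move=> u v /andP [/andP [Huv _] Hv] Hu; apply: S_edge Hu Huv Hv.
  + exact: Hx1.
  + by rewrite sym.
have [p2 Hp2] : exists p, ipath e Q2 b2 p b1.
  have Hm : 0 < m.
    case: (posnP m) => // Hm0; exfalso.
    move: Hl1 Hl2; rewrite Hm0 => /eqP; rewrite dist0E // => /eqP E1 /eqP; rewrite dist0E // => /eqP E2.
    by move: Hb; rewrite -E1 -E2 eqxx.
  have [d1 Hd1 Hl'1] : exists2 d, e b1 d & dist e d z = m.-1.
    by apply: (dist_step conn); rewrite distC // Hl1 prednK.
  have [d2 Hd2 Hl'2] : exists2 d, e b2 d & dist e d z = m.-1.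
    by apply: (dist_step conn); rewrite distC // Hl2 prednK.
  pose R : rel T := fun u v => e u v && Q2 u && Q2 v.
  have HQ2 : forall x, Q2 x = (lev x < m) by [].
  have Hc : connect R d2 d1.
    apply: connect_trans (conn_down HQ2 _) _.
      by rewrite distC // Hl'2 prednK.
    have HRs : connect_sym R.
      by apply: sym_connect_sym => u v; rewrite /R sym; case: (e v u) => //=; exact: andbC.
    rewrite HRs; apply: (conn_down HQ2).
    by rewrite distC // Hl'1 prednK.
  apply: (ipath_conn (R := R)) Hd2 _ Hc.
  + by move=> u v /andP [/andP []].
  + by move=> u v /andP [_ Hv].
  + by rewrite HQ2 distC // Hl'2 prednK.
  + by rewrite sym.
apply: (@two_paths _ e sym ch inS Q2 b1 b2 p1 p2) => //.
- move=> x y /andP [Hx _] Hy; apply/negP => Hxy.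
  have := lev_edge (y := x) (x := y); rewrite sym => /(_ Hxy) H.
  move: Hy; rewrite /Q2; slia.
- by move=> x /andP [Hx _]; rewrite /Q2 -leqNgt ltnW.
- by rewrite /inS Hl1 ltnn.
- by rewrite /Q2 Hl1 ltnn.
- by rewrite /inS Hl2 ltnn.
- by rewrite /Q2 Hl2 ltnn.
Qed.

Lemma gate_out n x y : dist e x y = n -> inS x -> ~~ inS y ->
  exists2 b, inK b & dist e b y < n.
Proof.
elim: n x => [|n IH] x Hd Hx Hy.
  by move/eqP: Hd; rewrite dist0E // => /eqP E; rewrite -E Hx in Hy.
have [w Hxw Hw] := dist_step conn Hd.
case: (boolP (inS w)) => Hws.
  have [b Hb Hbd] := IH w Hw Hws Hy; exists b => //; slia.
have Hlw : lev w = m.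
  have H1 : lev w <= m.
    rewrite leqNgt; apply/negP => H; move/negP: Hws; apply.
    exact: S_edge Hx Hxw H.
  have H2 := lev_edge (x := w) (y := x); rewrite sym in H2.
  move: Hx => /andP [Hx _]; have := H2 Hxw; slia.
exists w; last by rewrite Hw.
rewrite /inK Hlw eqxx /=; apply/existsP; exists x; by rewrite Hx sym.
Qed.

Lemma gate_in n y : lev y = n -> inS y -> exists2 b, inK b & dist e b y + m <= n.
Proof.
elim: n y => [|n IH] y Hl Hy.
  by move: Hy => /andP []; rewrite Hl.
have [w Hyw Hw] : exists2 w, e y w & dist e w z = n.
  by apply: (dist_step conn); rewrite distC.
have Hlw : lev w = n by rewrite distC.
case: (ltnP m n) => Hmn.
  have Hws : inS w by apply: S_edge Hy Hyw _; rewrite Hlw.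
  have [b Hb Hbd] := IH w Hlw Hws; exists b => //.
  have := dist_tri conn b w y; have := dist_edge Hyw; rewrite distC // => H1 H2.
  slia.
have Hmn' : m = n by move: Hy => /andP [Hy _]; rewrite Hl in Hy; slia.
exists w.
  rewrite /inK Hlw Hmn' eqxx /=; apply/existsP; exists y; by rewrite Hy sym.
have := dist_edge Hyw; rewrite distC // => H1; slia.
Qed.

End Cluster.


Section Main.
Variables (T : finType) (e : rel T).
Hypothesis sym : symmetric e.
Hypothesis irr : irreflexive e.
Hypothesis conn : connected_graph e.
Hypothesis ch : chordal e.

Lemma K_close z m s a b y : inK e z m s a -> inK e z m s b ->
  dist e a y <= (dist e b y).+1.
Proof.
move=> Ha Hb; case: (eqVneq a b) => [->|Hab]; first by slia.
have Hab' := cluster sym conn ch Ha Hb Hab.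
have := dist_tri conn a b y; have := dist_edge Hab'; slia.
Qed.

Lemma alpha a1 a2 y1 y2 q : e a1 a2 -> dist e y2 a2 = q -> dist e y2 a1 = q.+1 ->
  dist e a1 y1 < dist e a2 y1 -> dist e a2 y1 + q <= (dist e y2 y1).+1.
Proof.
move=> H12 Hq2 Hq1 Hlt.
have Hs : inS e y2 q a1 a1 by rewrite /inS Hq1 ltnSn connect0.
have Hk : inK e y2 q a1 a2.
  by rewrite /inK Hq2 eqxx /=; apply/existsP; exists a1; rewrite Hs sym H12.
case: (boolP (inS e y2 q a1 y1)) => Hy.
  have [b Hb Hbd] := gate_in sym conn (erefl _) Hy.
  have := K_close y1 Hk Hb; slia.
have [b Hb Hbd] := gate_out sym conn (erefl _) Hs Hy.
have := K_close y1 Hk Hb; slia.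
Qed.

Lemma dist_ecc v u : dist e v u <= ecc e v.
Proof. rewrite /ecc; exact: (leq_bigmax (F := fun u => dist e v u)). Qed.

Lemma ecc_diam v : ecc e v <= diam e.
Proof. rewrite /diam; exact: (leq_bigmax (F := fun v => ecc e v)). Qed.

Lemma ecc_att v : exists u, dist e v u = ecc e v.
Proof.
have H : 0 < #|T| by apply/card_gt0P; exists v.
by have [u Hu] := eq_bigmax (fun u => dist e v u) H; exists u; rewrite /ecc Hu.
Qed.

Lemma rad_le v : rad e <= ecc e v.
Proof.
rewrite /rad; have : v \in index_enum T by rewrite mem_index_enum.
elim: (index_enum T) => [|x s IH] //; rewrite inE big_cons => /orP [/eqP <-|Hv].
  exact: geq_minl.
exact: leq_trans (geq_minr _ _) (IH Hv).
Qed.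

Lemma rad_att (v : T) : exists c, ecc e c = rad e.
Proof.
rewrite /rad; apply: (big_ind (fun x => exists c, ecc e c = x)).
- have H : 0 < #|T| by apply/card_gt0P; exists v.
  by have [u Hu] := eq_bigmax (fun u => ecc e u) H; exists u; rewrite /diam Hu.
- move=> x y [cx Hx] [cy Hy]; cbv beta; case: (leqP x y) => h.
    by exists cx.
  by exists cy.
- by move=> c _; exists c.
Qed.

End Main.

Unset Implicit Arguments.

Theorem proposition8 (T : finType) (e : rel T) :
  simple_graph e -> connected_graph e -> chordal e ->
  forall u : T, exists2 c : T, c \in center e &
    dist e u c + ecc e c <= diam e.
Proof.
move=> [sym irr] conn ch u.
have [c1 Hc1] := rad_att e u.
have Hc1C : c1 \in center e by rewrite /center inE Hc1 eqxx.
case: (arg_minnP (fun c => dist e u c) Hc1C) => c0 Hc0 Hmin.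
exists c0 => //.
have Hc0in : c0 \in center e by [].
have Hec0 : ecc e c0 = rad e by move: Hc0in; rewrite /center inE => /eqP.
rewrite Hec0.
case: (leqP (dist e u c0 + rad e) (diam e)) => // Hlt; exfalso.
set r := rad e in Hlt Hec0 Hmin *; set D := diam e in Hlt.
set j := dist e u c0 in Hlt Hmin.
have Hjr : j <= r by rewrite /j distC // -Hec0 dist_ecc.
have HrD : r <= D by apply: leq_trans (rad_le e u) (ecc_diam e u).
have Hj1 : 0 < j by slia.
set m := j.-1.
have Hs : inS e u m c0 c0 by rewrite /inS -/j /m prednK // leqnn connect0.
have HKfar : forall a, inK e u m c0 a -> exists y, r < dist e a y.
  move=> a /andP [/eqP Ha _].
  have Hna : a \notin center e.
    apply/negP => HaC; have := Hmin a HaC; rewrite -/j Ha /m; slia.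
  have [y Hy] := ecc_att e a; exists y; rewrite Hy.
  rewrite ltn_neqAle rad_le andbT.
  by move: Hna; rewrite /center inE eq_sym.
have Hout : forall a y, inK e u m c0 a -> ~~ inS e u m c0 y -> dist e a y <= r.
  move=> a y Ha Hy.
  have [b Hb Hbd] := gate_out sym conn (erefl _) Hs Hy.
  have := K_close sym conn ch y Ha Hb; have := dist_ecc e c0 y; rewrite Hec0; slia.
have Hin : forall y, inS e u m c0 y -> exists2 q, inK e u m c0 q & dist e q y <= r.
  move=> y Hy.
  have [q Hq Hqd] := gate_in sym conn (erefl _) Hy.
  exists q => //.
  have := dist_ecc e u y; have := ecc_diam e u; rewrite -/D => H1 H2.
  have Hmj : m.+1 = j by rewrite /m prednK.
  slia.
pose A y := [set a | inK e u m c0 a & dist e a y <= r].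
case: (arg_minnP (fun y => #|A y|) Hs) => y1 Hy1 Hmin1.
have [a1 Ha1K Ha1d] := Hin y1 Hy1.
have Ha1 : a1 \in A y1 by rewrite inE Ha1K Ha1d.
have [y2 Hy2d] := HKfar a1 Ha1K.
have Hy2 : inS e u m c0 y2.
  apply: contraT => Hn; have := Hout a1 y2 Ha1K Hn; slia.
have Ha1n : a1 \notin A y2 by rewrite inE Ha1K /= -ltnNge.
have Hsub : ~~ (A y2 \subset A y1).
  apply/negP => Hs21.
  have Hp : A y2 \proper A y1 by apply/properP; split => //; exists a1.
  have := proper_card Hp; have := Hmin1 y2 Hy2; slia.
case/subsetPn: Hsub => a2; rewrite !inE => /andP [Ha2K Ha2d] Ha2n.
rewrite Ha2K /= -ltnNge in Ha2n.
have Hne : a1 != a2 by apply/eqP => E; move: Ha2n; rewrite -E; slia.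
have He12 := cluster sym conn ch Ha1K Ha2K Hne.
have Hq1 : dist e y2 a1 = (dist e y2 a2).+1.
  have := K_close sym conn ch y2 Ha1K Ha2K.
  rewrite (distC sym conn y2 a1) (distC sym conn y2 a2); slia.
have Hlt12 : dist e a1 y1 < dist e a2 y1 by slia.
have := alpha sym conn ch (y1 := y1) He12 (erefl _) Hq1 Hlt12.
have := dist_ecc e y2 y1; have := ecc_diam e y2; rewrite -/D.
rewrite (distC sym conn y2 a2) (distC sym conn y2 a1) in Hq1 *.
move=> H1 H2 H3.
slia.
Qed.
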